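(* Any non-confluent explicit Runge--Kutta method with 4 stages and order 4 has positivity step-size coefficient $\gamma=0$.
   Context: An $m$-stage explicit Runge--Kutta method has strictly lower-triangular $A=(a_{ij})\in\mathbb{R}^{m\times m}$, $b\in\mathbb{R}^m$, nodes $c_i=\sum_ja_{ij}$; it is non-confluent if the $c_i$ are pairwise distinct. Applied to $u_k'=q_k(u,t)(u_{k-1}-u_k)/\Delta x$ ($k=1,\dots,N$, $u_0:=u_N$) with step $\Delta t$: $y^i_k=u^n_k+\sum_{j<i}a_{ij}\xi^j_k(y^j_{k-1}-y^j_k)$, $u^{n+1}_k=u^n_k+\sum_ib_i\xi^i_k(y^i_{k-1}-y^i_k)$, $\xi^j_k=\frac{\Delta t}{\Delta x}q_k(y^j,t_n+c_j\Delta t)$. Treating the $\xi^j_\ell$ as independent variables on the grid $\ell\in\mathbb{Z}$, $u^{n+1}_k=\sum_{i=0}^mP_i(\xi)u^n_{k-i}$ for polynomials $P_i$ (independent of $k$) in the $m(m+1)/2$ variables $\xi^j_\ell$, $1\le j\le m$, $k-(m-j)\le\ell\le k$. The step-size coefficient is $\gamma(A,b)=\sup\{\delta\ge0:P_i(\xi)\ge0\ \forall i,\ \forall\xi\in[0,\delta]^{m(m+1)/2}\}$ (or $0$ if empty). *)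

(* Defs.v *)
From HB Require Import structures.
From mathcomp Require Import all_boot all_order all_algebra.
From mathcomp Require Import all_classical all_reals ereal.
Set Implicit Arguments. Unset Strict Implicit. Unset Printing Implicit Defensive.
Import Order.TTheory GRing.Theory Num.Theory.
Local Open Scope ring_scope.
Local Open Scope classical_set_scope.

(* Butcher tableau: A : 'M[R]_m, b : 'rV[R]_m; stages are 0-based here
   (stage j here = stage j+1 of the paper). *)

Definition rk_c (R : realType) (m : nat) (A : 'M[R]_m) (i : 'I_m) : R :=
  \sum_(j < m) A i j.

Definition rk_explicit (R : realType) (m : nat) (A : 'M[R]_m) : Prop :=
  forall i j : 'I_m, (i <= j)%N -> A i j = 0.

Definition rk_nonconfluent (R : realType) (m : nat) (A : 'M[R]_m) : Prop :=
  forall i j : 'I_m, rk_c A i = rk_c A j -> i = j.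

(* (classical) order >= 4: the eight Butcher order conditions for the
   rooted trees with at most 4 vertices *)
Definition rk_order4 (R : realType) (m : nat) (A : 'M[R]_m) (b : 'rV[R]_m)
  : Prop :=
  let c := rk_c A in
  (\sum_(i < m) b ord0 i = 1) /\
      (\sum_(i < m) b ord0 i * c i = 1 / 2) /\
      (\sum_(i < m) b ord0 i * c i ^+ 2 = 1 / 3) /\
      (\sum_(i < m) \sum_(j < m) b ord0 i * A i j * c j = 1 / 6) /\
      (\sum_(i < m) b ord0 i * c i ^+ 3 = 1 / 4) /\
      (\sum_(i < m) \sum_(j < m) b ord0 i * c i * A i j * c j = 1 / 8) /\
      (\sum_(i < m) \sum_(j < m) b ord0 i * A i j * c j ^+ 2 = 1 / 12) /\
      (\sum_(i < m) \sum_(j < m) \sum_(k < m)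
         b ord0 i * A i j * A j k * c k = 1 / 24).

Definition mxnat (R : realType) (m : nat) (A : 'M[R]_m) (i j : nat) : R :=
  match (insub i : option 'I_m), (insub j : option 'I_m) with
  | Some i', Some j' => A i' j'
  | _, _ => 0
  end.

Definition bnat (R : realType) (m : nat) (b : 'rV[R]_m) (i : nat) : R :=
  match (insub i : option 'I_m) with Some i' => b ord0 i' | None => 0 end.

(* The first n stage vectors y^0,...,y^{n-1} on the grid Z, for the scheme
   y^i_k = u_k + sum_{j<i} a_ij xi^j_k (y^j_{k-1} - y^j_k),
   where xi j l is the (independent) variable xi^j_l. *)
Fixpoint rk_stages (R : realType) (m : nat) (A : 'M[R]_m)
  (xi : nat -> int -> R) (u : int -> R) (n : nat) : seq (int -> R) :=
  match n with
  | 0 => [::]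
  | n'.+1 =>
      let s := rk_stages A xi u n' in
      rcons s (fun l : int => u l + \sum_(j < n')
        mxnat A n' j * xi j l *
          (nth (fun _ => 0) s j (l - 1) - nth (fun _ => 0) s j l))
  end.

Definition rk_step (R : realType) (m : nat) (A : 'M[R]_m) (b : 'rV[R]_m)
  (xi : nat -> int -> R) (u : int -> R) (k : int) : R :=
  let s := rk_stages A xi u m in
  u k + \sum_(i < m) bnat b i * xi i k *
          (nth (fun _ => 0) s i (k - 1) - nth (fun _ => 0) s i k).

(* P_i(xi): the coefficient of u^n_{k-i} in u^{n+1}_k (taken at k = 0),
   obtained by feeding the unit impulse at grid point -i. *)
Definition rk_P (R : realType) (m : nat) (A : 'M[R]_m) (b : 'rV[R]_m)
  (i : nat) (xi : nat -> int -> R) : R :=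
  rk_step A b xi (fun l : int => (l == - (i%:Z))%:R) 0.

Definition rk_pos_ok (R : realType) (m : nat) (A : 'M[R]_m) (b : 'rV[R]_m)
  (delta : R) : Prop :=
  forall xi : nat -> int -> R,
    (forall (j : nat) (l : int), (j < m)%N ->
        - ((m - 1 - j)%N%:Z) <= l <= 0 -> 0 <= xi j l <= delta) ->
    forall i : nat, (i <= m)%N -> 0 <= rk_P A b i xi.

(* step-size coefficient gamma(A,b) = sup{delta >= 0 admissible}, or 0 if
   that set is empty (realized by adjoining 0); value in the extended reals *)
Definition rk_gamma (R : realType) (m : nat) (A : 'M[R]_m) (b : 'rV[R]_m)
  : \bar R :=
  ereal_sup ([set 0%:E] `|`
     [set (d%:E) | d in [set d : R | 0 <= d /\ rk_pos_ok A b d]]).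

(* Main.v *)
Require Import Defs.
From HB Require Import structures.
From mathcomp Require Import all_boot all_order all_algebra.
From mathcomp Require Import all_classical all_reals ereal.
From mathcomp Require Import lra ring.
Import Order.TTheory GRing.Theory Num.Theory.
Local Open Scope ring_scope.

Section Stages.
Variables (R : realType) (m : nat) (A : 'M[R]_m) (xi : nat -> int -> R) (u : int -> R).
Local Notation St n j := (nth (fun _ => 0) (rk_stages A xi u n) j).

Lemma size_stages n : size (rk_stages A xi u n) = n.
Proof. by elim: n => [|n IH] //=; rewrite size_rcons IH. Qed.

Lemma stages_prefix n j : (j < n)%N -> St n j = St j.+1 j.
Proof.
elim: n => [|n IH] // jn.
rewrite /= nth_rcons size_stages.
move: jn; rewrite ltnS leq_eqVlt => /orP[/eqP ->|jn].
  by rewrite ltnn eqxx /= nth_rcons size_stages ltnn eqxx.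
by rewrite jn IH.
Qed.

Lemma stageE n j l : (j < n)%N ->
  St n j l = u l + \sum_(k < j) mxnat A j k * xi k l * (St n k (l - 1) - St n k l).
Proof.
move=> jn.
have e : forall k, (k < j)%N -> St j k = St n k.
  by move=> k kj; rewrite stages_prefix // [RHS]stages_prefix // (ltn_trans kj jn).
rewrite stages_prefix //= nth_rcons size_stages ltnn eqxx.
congr (_ + _); apply: eq_bigr => k _.
by rewrite !e ?ltn_ord.
Qed.

Lemma stage_triv n j l : (j < n)%N -> (forall k, (k < j)%N -> xi k l = 0) -> St n j l = u l.
Proof.
move=> jn H; rewrite stageE // big1 ?addr0 // => k _.
by rewrite H ?ltn_ord // mulr0 mul0r.
Qed.
End Stages.


Section P.
Variables (R : realType) (m : nat) (A : 'M[R]_m) (b : 'rV[R]_m).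

Definition xi1 (i0 : nat) (d : R) : nat -> int -> R :=
  fun j l => if (j == i0) && (l == 0) then d else 0.
Definition xi2 (i0 j0 : nat) (d : R) : nat -> int -> R :=
  fun j l => if ((j == i0) && (l == 0)) || ((j == j0) && (l == -1)) then d else 0.

Lemma P1E i0 d : (i0 < m)%N -> rk_P A b 1 (xi1 i0 d) = bnat b i0 * d.
Proof.
move=> i0m; rewrite /rk_P /rk_step.
rewrite (bigD1 (Ordinal i0m)) //= big1; last first.
  move=> i /negbTE ni; rewrite /xi1.
  have -> : (nat_of_ord i == i0) = false.
    by apply: contraFF ni => /eqP h; apply/eqP/val_inj.
  by rewrite /= mulr0 mul0r.
rewrite !stage_triv //; last first.
- by move=> k ki; rewrite /xi1 (ltn_eqF ki).
- by move=> k ki; rewrite /xi1 (ltn_eqF ki).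
rewrite /xi1 !eqxx /=.
by rewrite add0r addr0 subr0 mulr1.
Qed.

Lemma P2E i0 j0 d : (j0 < i0)%N -> (i0 < m)%N ->
  rk_P A b 2 (xi2 i0 j0 d) = bnat b i0 * d * (mxnat A i0 j0 * d).
Proof.
move=> ji i0m; rewrite /rk_P /rk_step.
rewrite (bigD1 (Ordinal i0m)) //= big1; last first.
  move=> i /negbTE ni; rewrite /xi2.
  have -> : (nat_of_ord i == i0) = false.
    by apply: contraFF ni => /eqP h; apply/eqP/val_inj.
  by rewrite /= andbF mulr0 mul0r.
rewrite [X in _ - X]stage_triv //; last first.
  by move=> k ki; rewrite /xi2 (ltn_eqF ki) /= andbF.
rewrite stageE //.
rewrite (bigD1 (Ordinal ji)) //= big1; last first.
  move=> k /negbTE nk; rewrite /xi2.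
  have -> : (nat_of_ord k == i0) = false by rewrite ltn_eqF.
  have -> : (nat_of_ord k == j0) = false.
    by apply: contraFF nk => /eqP h; apply/eqP/val_inj.
  by rewrite /= mulr0 mul0r.
have j0m : (j0 < m)%N by apply: ltn_trans ji i0m.
rewrite !stage_triv //; last first.
- move=> k kj; rewrite /xi2 (ltn_eqF kj) (ltn_eqF (ltn_trans kj ji)) //.
- move=> k kj; rewrite /xi2 (ltn_eqF kj) (ltn_eqF (ltn_trans kj ji)) //.
rewrite /xi2 !eqxx (ltn_eqF ji) (gtn_eqF ji) /=.
rewrite !addr0 !add0r !subr0 !mulr1 //.
Qed.
End P.
Arguments xi1 {R}.
Arguments xi2 {R}.


Section Alg.
Variable R : realType.

Lemma alg_c4 (s t u a32 a42 a43 b1 b2 b3 b4 : R) :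
  s != 0 -> 
  b2*s + b3*t + b4*u = 1/2 ->
  b2*s^+2 + b3*t^+2 + b4*u^+2 = 1/3 ->
  b2*s^+3 + b3*t^+3 + b4*u^+3 = 1/4 ->
  b3*a32*s + b4*a42*s + b4*a43*t = 1/6 ->
  b3*t*a32*s + b4*u*a42*s + b4*u*a43*t = 1/8 ->
  b3*a32*s^+2 + b4*a42*s^+2 + b4*a43*t^+2 = 1/12 ->
  b4*a43*a32*s = 1/24 ->
  [/\ u = 1, b4*a43 = b3*(1-t) & b3*a32 + b4*a42 = b2*(1-s)].
Proof.
move=> s0 O2 O3 O4 O5 O6 O7 O8.
pose g2 : R := b3*a32 + b4*a42 - b2*(1-s).
pose g3 : R := b4*a43 - b3*(1-t).
pose g4 : R := -(b4*(1-u)).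
pose h2 : R := -(s^+2)/2. pose h3 : R := a32*s - t^+2/2. pose h4 : R := a42*s + a43*t - u^+2/2.
have G1 : g2*s + g3*t + g4*u = 0.
{
  have -> : g2*s + g3*t + g4*u = (b3*a32*s + b4*a42*s + b4*a43*t)
     - (b2*s + b3*t + b4*u) + (b2*s^+2 + b3*t^+2 + b4*u^+2) by rewrite /g2 /g3 /g4; ring.
  rewrite O5 O2 O3; lra.
}
have G2 : g2*s^+2 + g3*t^+2 + g4*u^+2 = 0.
{
  have -> : g2*s^+2 + g3*t^+2 + g4*u^+2 = (b3*a32*s^+2 + b4*a42*s^+2 + b4*a43*t^+2)
     - (b2*s^+2 + b3*t^+2 + b4*u^+2) + (b2*s^+3 + b3*t^+3 + b4*u^+3) by rewrite /g2 /g3 /g4; ring.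
  rewrite O7 O3 O4; lra.
}
have G3 : g2*h2 + g3*h3 + g4*h4 = 0.
{
  have -> : g2*h2 + g3*h3 + g4*h4 = b4*a43*a32*s - (b3*a32*s + b4*a42*s + b4*a43*t)
     + (b3*t*a32*s + b4*u*a42*s + b4*u*a43*t) - (g2*s^+2 + g3*t^+2 + g4*u^+2)/2
     by rewrite /g2 /g3 /g4 /h2 /h3 /h4; ring.
  rewrite O8 O5 O6 G2; lra.
}
have H1 : b2*h2 + b3*h3 + b4*h4 = 0.
{
  have -> : b2*h2 + b3*h3 + b4*h4 = (b3*a32*s + b4*a42*s + b4*a43*t)
     - (b2*s^+2 + b3*t^+2 + b4*u^+2)/2 by rewrite /h2 /h3 /h4; ring.
  rewrite O5 O3; lra.
}
have H2 : b2*s*h2 + b3*t*h3 + b4*u*h4 = 0.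
{
  have -> : b2*s*h2 + b3*t*h3 + b4*u*h4 = (b3*t*a32*s + b4*u*a42*s + b4*u*a43*t)
     - (b2*s^+3 + b3*t^+3 + b4*u^+3)/2 by rewrite /h2 /h3 /h4; ring.
  rewrite O6 O4; lra.
}
pose x2 : R := t*u^+2 - u*t^+2. pose x3 : R := u*s^+2 - s*u^+2. pose x4 : R := s*t^+2 - t*s^+2.
pose y2 : R := b3*b4*(u - t). pose y3 : R := b4*b2*(s - u). pose y4 : R := b2*b3*(t - s).
pose D : R := x2*h2 + x3*h3 + x4*h4.
have XY : x2*y2 + x3*y3 + x4*y4 = 1/72.
{
  have -> : x2*y2 + x3*y3 + x4*y4 = (b2*s + b3*t + b4*u) * (b2*s^+3 + b3*t^+3 + b4*u^+3)
    - (b2*s^+2 + b3*t^+2 + b4*u^+2)^+2 by rewrite /x2 /x3 /x4 /y2 /y3 /y4; ring.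
  rewrite O2 O3 O4; lra.
}
have K1 : h2 * (x2*y2 + x3*y3 + x4*y4) - y2 * D =
   x3*(b4*(b2*s*h2 + b3*t*h3 + b4*u*h4) - b4*u*(b2*h2 + b3*h3 + b4*h4))
   - x4*(b3*(b2*s*h2 + b3*t*h3 + b4*u*h4) - b3*t*(b2*h2 + b3*h3 + b4*h4)).
  by rewrite /D /x2 /x3 /x4 /y2 /y3 /y4 /h2 /h3 /h4; ring.
rewrite XY H1 H2 !(mulr0, subr0) in K1.
have D0 : D != 0.
{
  apply/eqP=> D0; rewrite D0 mulr0 subr0 /h2 in K1.
  have : s^+2 = 0 by lra.
  by move/eqP; rewrite sqrf_eq0 (negbTE s0).
}
have K4 : g4 * D - x4 * (g2*h2 + g3*h3 + g4*h4) =
   h2*(t*(g2*s^+2 + g3*t^+2 + g4*u^+2) - t^+2*(g2*s + g3*t + g4*u))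
   - h3*(s*(g2*s^+2 + g3*t^+2 + g4*u^+2) - s^+2*(g2*s + g3*t + g4*u)).
  by rewrite /D /x2 /x3 /x4 /g2 /g3 /g4 /h2 /h3 /h4; ring.
have K3 : g3 * D - x3 * (g2*h2 + g3*h3 + g4*h4) =
   - h2*(u*(g2*s^+2 + g3*t^+2 + g4*u^+2) - u^+2*(g2*s + g3*t + g4*u))
   + h4*(s*(g2*s^+2 + g3*t^+2 + g4*u^+2) - s^+2*(g2*s + g3*t + g4*u)).
  by rewrite /D /x2 /x3 /x4 /g2 /g3 /g4 /h2 /h3 /h4; ring.
have K2 : g2 * D - x2 * (g2*h2 + g3*h3 + g4*h4) =
   h3*(u*(g2*s^+2 + g3*t^+2 + g4*u^+2) - u^+2*(g2*s + g3*t + g4*u))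
   - h4*(t*(g2*s^+2 + g3*t^+2 + g4*u^+2) - t^+2*(g2*s + g3*t + g4*u)).
  by rewrite /D /x2 /x3 /x4 /g2 /g3 /g4 /h2 /h3 /h4; ring.
rewrite G1 G2 G3 !(mulr0, subr0, addr0, oppr0) in K2 K3 K4.
have e4 : g4 = 0 by apply/eqP; rewrite -(mulIr_eq0 _ (mulIf D0)) K4.
have e3 : g3 = 0 by apply/eqP; rewrite -(mulIr_eq0 _ (mulIf D0)) K3.
have e2 : g2 = 0 by apply/eqP; rewrite -(mulIr_eq0 _ (mulIf D0)) K2.
have b40 : b4 != 0 by apply/eqP=> b40; rewrite b40 !mul0r in O8; lra.
split.
- move: e4; rewrite /g4 => /eqP; rewrite oppr_eq0 mulf_eq0 (negbTE b40) /= subr_eq0.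
  by move/eqP.
- by move: e3; rewrite /g3; lra.
- by move: e2; rewrite /g2; lra.
Qed.
End Alg.


Lemma alg_sign (R : realType) (s t a32 a42 a43 b2 b3 b4 : R) :
  s != t -> s != 1 -> t != 1 -> t != 0 ->
  b2*s + b3*t + b4 = 1/2 ->
  b2*s^+2 + b3*t^+2 + b4 = 1/3 ->
  b2*s^+3 + b3*t^+3 + b4 = 1/4 ->
  b4*a43 = b3*(1-t) -> b3*a32 + b4*a42 = b2*(1-s) ->
  b4*a43*a32*s = 1/24 ->
  0 <= b2 -> 0 <= b3 -> 0 <= b3*a32 -> 0 <= b4*a43 -> 0 <= b3*(t-a32) ->
  0 <= b4*a42 -> 0 <= b4*(1-a42-a43) -> False.
Proof.
move=> st s1 t1 t0 O2 O3 O4 D3 D2 O8 pb2 pb3 pw32 pw43 pw31 pw42 pw41.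
have I2 : 12*b2*s*(s-t)*(s-1) = 2*t-1.
  have -> : 12*b2*s*(s-t)*(s-1) = 12*((b2*s^+3 + b3*t^+3 + b4) - (1+t)*(b2*s^+2 + b3*t^+2 + b4)
      + t*(b2*s + b3*t + b4)) by ring.
  rewrite O2 O3 O4; lra.
have I3 : 12*b3*t*(t-s)*(t-1) = 2*s-1.
  have -> : 12*b3*t*(t-s)*(t-1) = 12*((b2*s^+3 + b3*t^+3 + b4) - (1+s)*(b2*s^+2 + b3*t^+2 + b4)
      + s*(b2*s + b3*t + b4)) by ring.
  rewrite O2 O3 O4; lra.
have I4 : 12*b4*(1-s)*(1-t) = 3-4*s-4*t+6*s*t.
  have -> : 12*b4*(1-s)*(1-t) = 12*((b2*s^+3 + b3*t^+3 + b4) - (s+t)*(b2*s^+2 + b3*t^+2 + b4)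
      + s*t*(b2*s + b3*t + b4)) by ring.
  rewrite O2 O3 O4; lra.
set K := b3*a32.
have EK : 24*K*s*(1-t) = 1.
  have -> : 24*K*s*(1-t) = 24*(b3*(1-t)*a32*s) by rewrite /K; ring.
  rewrite -D3 O8; lra.
have W31 : 0 <= b3*t - K by move: pw31; rewrite /K; lra.
have W42 : 0 <= b2*(1-s) - K.
  have -> : b2*(1-s) - K = b4*a42 by rewrite -D2 /K; ring.
  done.
have W41 : 0 <= b4 - (b2*(1-s) - K) - b3*(1-t).
  have -> : b4 - (b2*(1-s) - K) - b3*(1-t) = b4*(1-a42-a43) by rewrite -D3 -D2 /K; ring.
  done.
have W43 : 0 <= b3*(1-t) by rewrite -D3.
have Kpos : 0 < K.
  rewrite lt0r pw32 andbT; apply/eqP => K0; move: EK; rewrite K0; lra.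
have tlt1 : t < 1.
  rewrite ltNge le_eqVlt eq_sym (negbTE t1) /=; apply/negP => t1'.
  have b30 : b3 = 0 by apply/eqP; rewrite eq_le pb3 andbT; nra.
  by move: Kpos; rewrite /K b30 mul0r ltxx.
have spos : 0 < s.
  have hk : 0 < K*(1-t) by apply: mulr_gt0; lra.
  have EK' : (K*(1-t))*s = 1/24 by move: EK; lra.
  rewrite ltNge; apply/negP => hs.
  have : (K*(1-t))*s <= 0 by apply: mulr_ge0_le0; lra.
  lra.
have b3pos : 0 < b3.
  rewrite lt0r pb3 andbT; apply/eqP => b30; move: Kpos; rewrite /K b30 mul0r ltxx //.
case: (ltgtP s t) => [slt|tls|]; last by move/eqP; rewrite (negbTE st).
-
  have P : 0 < 24*s*(t-s)*(1-t) by apply: mulr_gt0; [apply: mulr_gt0; [lra|lra]|lra].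
  have E : 24*s*(t-s)*(1-t) * ((b3*t - K) + (b2*(1-s) - K)) = -((2*s-1)^+2 + (2*t-1)^+2).
    have -> : 24*s*(t-s)*(1-t) * ((b3*t - K) + (b2*(1-s) - K)) =
       -2*s*(12*b3*t*(t-s)*(t-1)) + 2*(1-t)*(12*b2*s*(s-t)*(s-1)) - 2*(t-s)*(24*K*s*(1-t)) by ring.
    rewrite I2 I3 EK; ring.
  have : 0 <= 24*s*(t-s)*(1-t) * ((b3*t - K) + (b2*(1-s) - K)).
    by apply: mulr_ge0; [lra|lra].
  rewrite E.
  have : 0 < (2*s-1)^+2 + (2*t-1)^+2.
    have h1 : 0 <= (2*s-1 + (2*t-1))^+2 by apply: sqr_ge0.
    have h2 : 0 < (t-s)^+2 by apply: exprn_gt0; lra.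
    nra.
  lra.
-
  case: (ltgtP t 0) => [tneg|tpos|]; last by move/eqP; rewrite (negbTE t0).
  + have : b3 * t < 0 by rewrite pmulr_rlt0.
    lra.
  + have h2s : 1 < 2*s.
      have X : 0 < 12*b3*(t*((s-t)*(1-t))).
        by apply: mulr_gt0; [apply: mulr_gt0; lra|apply: mulr_gt0; [lra|apply: mulr_gt0; lra]].
      have : 12*b3*(t*((s-t)*(1-t))) = 2*s-1 by rewrite -I3; ring.
      lra.
    case: (ltgtP s 1) => [sl1|s1'|]; last by move/eqP; rewrite (negbTE s1).
    * have tle : 2*t <= 1.
        have : 0 <= 12*b2*s*(s-t)*(1-s) by apply: mulr_ge0; [apply: mulr_ge0; [apply: mulr_ge0; [apply: mulr_ge0|]|]|]; lra.
        have : 12*b2*s*(s-t)*(1-s) = 1 - 2*t by rewrite -[1 - 2*t]opprB -I2; ring.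
        lra.
      have P : 0 < 24*s*t*(1-s)*(1-t)*(s-t).
        apply: mulr_gt0; [apply: mulr_gt0; [apply: mulr_gt0; [apply: mulr_gt0|]|]|]; lra.
      have E : 24*s*t*(1-s)*(1-t)*(s-t) * (b4 - (b2*(1-s) - K) - b3*(1-t)) =
          2*s*t*(s-t)*(12*b4*(1-s)*(1-t)) + 2*t*(1-s)*(1-t)*(12*b2*s*(s-t)*(s-1))
          + t*(1-s)*(s-t)*(24*K*s*(1-t)) - 2*s*(1-s)*(1-t)*(12*b3*t*(t-s)*(t-1)) by ring.
      rewrite I2 I3 I4 EK in E.
      have : 0 <= 24*s*t*(1-s)*(1-t)*(s-t) * (b4 - (b2*(1-s) - K) - b3*(1-t)).
        by apply: mulr_ge0; lra.
      rewrite E.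
      set N := 4*(1-3*s+3*s^+2)*t^+2 + (-5+15*s-12*s^+2)*t + 2*(1-s)*(1-2*s).
      have EN : 2*s*t*(s-t)*(3-4*s-4*t+6*s*t) + 2*t*(1-s)*(1-t)*(2*t-1) + t*(1-s)*(s-t) * 1
         - 2*s*(1-s)*(1-t)*(2*s-1) = (s-t) * N by rewrite /N; ring.
      rewrite EN.
      have EN2 : N = (1-2*t)*(2*(1-s)*(1-2*s)) + 2*t*((s-1/2)*(s-1)) + 4*(1-3*s+3*s^+2)*(t*(t-1/2)) by rewrite /N; field.
      have Nneg : N < 0.
        rewrite EN2.
        have q1 : (1-2*t)*(2*(1-s)*(1-2*s)) <= 0.
          apply: mulr_ge0_le0; first lra. nra.
        have q2 : 2*t*((s-1/2)*(s-1)) < 0.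
          rewrite pmulr_rlt0; last lra. rewrite pmulr_rlt0; lra.
        have q3 : 4*(1-3*s+3*s^+2)*(t*(t-1/2)) <= 0.
          apply: mulr_ge0_le0.
            have : 0 <= (2*s - 1)^+2 by apply: sqr_ge0. nra.
          apply: mulr_ge0_le0; lra.
        lra.
      have : (s-t) * N < 0 by rewrite pmulr_rlt0; lra.
      lra.
    * have : b2*(1-s) <= 0 by apply: mulr_ge0_le0; lra.
      lra.
Qed.


Section Main.
Variables (R : realType) (A : 'M[R]_4) (b : 'rV[R]_4).

Lemma mxnatE i j : (i < 4)%N -> (j < 4)%N -> mxnat A i j = A (inord i) (inord j).
Proof.
move=> hi hj; rewrite /mxnat.
case: insubP => [i' _ ei|]; last by rewrite hi.
case: insubP => [j' _ ej|]; last by rewrite hj.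
by congr (A _ _); apply/val_inj; rewrite /= inordK.
Qed.

Lemma bnatE i : (i < 4)%N -> bnat b i = b ord0 (inord i).
Proof.
move=> hi; rewrite /bnat.
case: insubP => [i' _ ei|]; last by rewrite hi.
by congr (b _ _); apply/val_inj; rewrite /= inordK.
Qed.

Lemma sum4 (F : 'I_4 -> R) :
  \sum_(i < 4) F i = F (inord 0) + F (inord 1) + F (inord 2) + F (inord 3).
Proof.
rewrite !big_ord_recl big_ord0 addr0 /= !addrA.
by congr (_ + _ + _ + _); congr F; apply/val_inj; rewrite /= inordK.
Qed.

Lemma xi_range {f : nat -> int -> R} {d} : 0 <= d -> (forall j l, f j l = 0 \/ f j l = d) ->
  forall (j : nat) (l : int), (j < 4)%N ->
        - ((4 - 1 - j)%N%:Z) <= l <= 0 -> 0 <= f j l <= d.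
Proof. by move=> d0 H j l _ _; case: (H j l) => ->; rewrite ?lexx ?d0. Qed.

Lemma not_ok d : 0 < d -> rk_explicit A -> rk_nonconfluent A -> rk_order4 A b ->
  ~ rk_pos_ok A b d.
Proof.
move=> d0 ex nc ord ok.
have pb : forall i, (i < 4)%N -> 0 <= b ord0 (inord i).
  move=> i hi.
  have H : forall j l, xi1 i d j l = 0 \/ xi1 i d j l = d.
    by move=> j l; rewrite /xi1; case: ifP; [right|left].
  have := ok (xi1 i d) (xi_range (ltW d0) H) 1%N isT.
  by rewrite P1E // bnatE // pmulr_lge0.
have pw : forall i j, (j < i)%N -> (i < 4)%N -> 0 <= b ord0 (inord i) * A (inord i) (inord j).
  move=> i j ji hi.
  have H : forall j' l, xi2 i j d j' l = 0 \/ xi2 i j d j' l = d.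
    by move=> j' l; rewrite /xi2; case: ifP; [right|left].
  have := ok (xi2 i j d) (xi_range (ltW d0) H) 2%N isT.
  rewrite P2E // bnatE // mxnatE ?(ltn_trans ji hi) //.
  have -> : b ord0 (inord i) * d * (A (inord i) (inord j) * d) =
     (b ord0 (inord i) * A (inord i) (inord j)) * (d * d) by ring.
  by rewrite pmulr_lge0 ?mulr_gt0.
have Z : forall i j, (i <= j)%N -> (j < 4)%N -> A (inord i) (inord j) = 0.
  move=> i j ij hj; apply: ex; rewrite !inordK //; exact: (leq_ltn_trans ij hj).
have ncE : forall i j, (i < 4)%N -> (j < 4)%N -> i <> j -> rk_c A (inord i) <> rk_c A (inord j).
  move=> i j hi hj ij /nc h; apply: ij.
  by move: (congr1 val h); rewrite /= !inordK.
have cE : forall i, rk_c A (inord i) = \sum_(j < 4) A (inord i) (inord j).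
  move=> i; rewrite /rk_c; apply: eq_bigr => j _; congr (A _ _).
  by apply/val_inj; rewrite /= inordK.
move: ord; rewrite /rk_order4 /= !sum4 !cE !sum4 !inord_val.
rewrite (Z 0 0) // (Z 0 1) // (Z 0 2) // (Z 0 3) // (Z 1 1) // (Z 1 2) // (Z 1 3) //.
rewrite (Z 2 2) // (Z 2 3) // (Z 3 3) //.
set a10 := A (inord 1) (inord 0).
set a20 := A (inord 2) (inord 0).
set a21 := A (inord 2) (inord 1).
set a30 := A (inord 3) (inord 0).
set a31 := A (inord 3) (inord 1).
set a32 := A (inord 3) (inord 2).
set b0 := b ord0 (inord 0).
set b1 := b ord0 (inord 1).
set b2 := b ord0 (inord 2).
set b3 := b ord0 (inord 3).
case=> O1 [O2 [O3 [O4 [O5 [O6 [O7 O8]]]]]].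
have c1E : rk_c A (inord 1) = a10. rewrite cE sum4 !inord_val (Z 1 1) // (Z 1 2) // (Z 1 3) //; by rewrite !addr0.
have c2E : rk_c A (inord 2) = a20 + a21 by rewrite cE sum4 !inord_val (Z 2 2) // (Z 2 3) //; by rewrite !addr0.
have c3E : rk_c A (inord 3) = a30 + a31 + a32 by rewrite cE sum4 !inord_val (Z 3 3) //; by rewrite !addr0.
have c0E : rk_c A (inord 0) = 0 by rewrite cE sum4 !inord_val (Z 0 0) // (Z 0 1) // (Z 0 2) // (Z 0 3) //; by rewrite !addr0.
have n10 : a10 != 0 by apply/eqP; rewrite -c1E -c0E; apply: ncE.
have n12 : a10 != a20 + a21 by apply/eqP; rewrite -c1E -c2E; apply: ncE.
have n13 : a10 != a30 + a31 + a32 by apply/eqP; rewrite -c1E -c3E; apply: ncE.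
have n23 : a20 + a21 != a30 + a31 + a32 by apply/eqP; rewrite -c2E -c3E; apply: ncE.
have n20 : a20 + a21 != 0 by apply/eqP; rewrite -c2E -c0E; apply: ncE.
have [u1 D3 D2] := @alg_c4 R a10 (a20 + a21) (a30 + a31 + a32) a21 a31 a32 b0 b1 b2 b3
    n10 ltac:(move: O2; lra) ltac:(move: O3; lra) ltac:(move: O4; lra) ltac:(move: O5; lra)
    ltac:(move: O6; lra) ltac:(move: O7; lra) ltac:(move: O8; lra).
have pb1 : 0 <= b1 := pb 1%N isT.
have pb2 : 0 <= b2 := pb 2%N isT.
have w21 : 0 <= b2 * a21 := pw 2%N 1%N isT isT.
have w20 : 0 <= b2 * a20 := pw 2%N 0%N isT isT.
have w32 : 0 <= b3 * a32 := pw 3%N 2%N isT isT.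
have w31 : 0 <= b3 * a31 := pw 3%N 1%N isT isT.
have w30 : 0 <= b3 * a30 := pw 3%N 0%N isT isT.
have a30E : a30 = 1 - a31 - a32 by lra.
rewrite a30E in O2 O3 O5 w30.
rewrite u1 in n13 n23.
apply: (@alg_sign R a10 (a20 + a21) a21 a31 a32 b1 b2 b3) => //.
- by move: O2; lra.
- by move: O3; lra.
- by move: O5; lra.
- by move: O8; lra.
- by have -> : a20 + a21 - a21 = a20 by ring.
Qed.
End Main.


Theorem proposition7 (R : realType) (A : 'M[R]_4) (b : 'rV[R]_4) :
  rk_explicit A -> rk_nonconfluent A -> rk_order4 A b ->
  rk_gamma A b = (0 : R)%:E.
Proof.
move=> ex nc ord.
rewrite /rk_gamma; apply/eqP; rewrite eq_le; apply/andP; split.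
- apply: ge_ereal_sup => x [->|[d [d0 okd] <-]] //.
  rewrite lee_fin leNgt; apply/negP => dpos.
  exact: (@not_ok R A b d dpos ex nc ord okd).
- by apply: ereal_sup_ubound; left.
Qed.
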